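(* Let $n\geq 0$ be an integer, $r,s\in\mathbf{N}$, $k\in\mathbf{Z}$ and $\lambda\in\mathbf{C}$ with $\lambda\neq 1$. Then \[\tilde{A}_{n}^{(r,k)}(x)=\sum_{m=0}^{n}\left\{\sum_{l=0}^{n-m}\sum_{a=0}^{l}\frac{\binom{n}{l}\binom{s}{a}\binom{l}{a}a!}{(1-\lambda)^{a}}S_{1}(n-l,m)\tilde{A}_{l-a}^{(r,k)}\right\}H_{m}^{(s)}(x\mid\lambda).\]
   Context: For $k\in\mathbf{Z}$, $Lif_{k}(x)=\sum_{m=0}^{\infty}\frac{x^{m}}{m!(m+1)^{k}}$. For integers $r\geq 0$, $k\in\mathbf{Z}$, the polynomials $\tilde{A}_{n}^{(r,k)}(x)$ are defined by \[\left(\frac{t}{(1+t)\log(1+t)}\right)^{r}Lif_{k}\left(-\log(1+t)\right)(1+t)^{x}=\sum_{n=0}^{\infty}\tilde{A}_{n}^{(r,k)}(x)\frac{t^{n}}{n!},\] and $\tilde{A}_{n}^{(r,k)}=\tilde{A}_{n}^{(r,k)}(0)$. For $\lambda\neq 1$, the Frobenius–Euler polynomials of order $s$ are defined by $\left(\frac{1-\lambda}{e^{t}-\lambda}\right)^{s}e^{xt}=\sum_{n=0}^{\infty}H_{n}^{(s)}(x\mid\lambda)\frac{t^{n}}{n!}$. $S_{1}(n,m)$ denotes the signed Stirling numbers of the first kind, defined by $x(x-1)\cdots(x-n+1)=\sum_{m=0}^{n}S_{1}(n,m)x^{m}$. *)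

(* Defs.v *)
(* Formal power series are represented by their coefficient
   sequences  nat -> F  over a field F; the complex numbers are R[i] for a
   realType R (mathcomp-real-closed's complex). *)
From HB Require Import structures.
From mathcomp Require Import all_boot all_order all_algebra.
From mathcomp Require Import complex.
From mathcomp Require Import reals.
Set Implicit Arguments. Unset Strict Implicit. Unset Printing Implicit Defensive.
Import Order.TTheory GRing.Theory Num.Theory.
Local Open Scope ring_scope.

Section Series.
Variable F : fieldType.

Definition sone : nat -> F := fun n => (n == 0%N)%:R.
Definition smul (a b : nat -> F) : nat -> F :=
  fun n => \sum_(i < n.+1) a i * b (n - i)%N.
Definition spow (a : nat -> F) (m : nat) : nat -> F := iter m (smul a) sone.
(* composition f(g(t)), meaningful when g has zero constant term *)
Definition scomp (f g : nat -> F) : nat -> F :=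
  fun n => \sum_(m < n.+1) f m * spow g m n.
(* multiplicative inverse of a series with nonzero constant term:
   a = a0 (1 - u), 1/a = a0^-1 * sum_j u^j *)
Definition sinv (a : nat -> F) : nat -> F :=
  let u := fun n => if n is 0 then 0 else - (a n / a 0%N) in
  fun n => (a 0%N)^-1 * scomp (fun _ => 1) u n.
End Series.

Section Defs.
Variable F : fieldType.

(* log(1+t)/t = sum_n (-1)^n t^n/(n+1) *)
Definition log1p_div_t : nat -> F := fun n => (-1) ^+ n / (n.+1)%:R.
Definition one_plus_t : nat -> F := fun n => if n is 0 then 1 else if n is 1 then 1 else 0.
(* t / ((1+t) log(1+t)) *)
Definition Afactor : nat -> F := sinv (smul one_plus_t log1p_div_t).
(* - log(1+t) = sum_{n>=1} (-1)^n t^n / n *)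
Definition neg_log1p : nat -> F :=
  fun n => if n is 0 then 0 else (-1) ^+ n / n%:R.
Definition Lif (k : int) : nat -> F :=
  fun m => ((m`!)%:R * ((m.+1)%:R ^ k))^-1.
(* (1+t)^x = sum_n binom(x,n) t^n *)
Definition binser (x : F) : nat -> F :=
  fun n => (\prod_(i < n) (x - i%:R)) / (n`!)%:R.
Definition expser (x : F) : nat -> F := fun n => x ^+ n / (n`!)%:R.

Definition Atilde (r : nat) (k : int) (x : F) (n : nat) : F :=
  (n`!)%:R * smul (smul (spow Afactor r) (scomp (Lif k) neg_log1p)) (binser x) n.
Definition Atilde0 (r : nat) (k : int) (n : nat) : F := Atilde r k 0 n.

Definition FE_base (lam : F) : nat -> F :=
  let e := fun n => if n is 0 then 1 - lam else ((n`!)%:R)^-1 in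
  fun n => (1 - lam) * sinv e n.
Definition FrobEuler (s : nat) (lam x : F) (n : nat) : F :=
  (n`!)%:R * smul (spow (FE_base lam) s) (expser x) n.
End Defs.

Definition S1 (n m : nat) : int := (\prod_(i < n) ('X - (i%:Z)%:P))`_m.
Arguments Atilde0 {F}.
Arguments Atilde {F}.
Arguments FrobEuler {F}.

(* Main.v *)
Require Import Defs.
From HB Require Import structures.
From mathcomp Require Import all_boot all_order all_algebra.
From mathcomp Require Import complex.
From mathcomp Require Import reals.
From mathcomp Require Import zify ring.
From Stdlib Require Import FunctionalExtensionality.
Import Order.TTheory GRing.Theory Num.Theory.
Local Open Scope ring_scope.

Definition tr {F : fieldType} (N : nat) (a : nat -> F) : {poly F} := \poly_(i < N) a i.

Lemma smul_tr (F : fieldType) N (a b : nat -> F) n : (n < N)%N ->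
  smul a b n = (tr N a * tr N b)`_n.
Proof.
move=> hn; rewrite coefM /smul; apply: eq_bigr => i _.
rewrite !coef_poly (leq_ltn_trans (leq_ord i) hn).
by rewrite (leq_ltn_trans (leq_subr _ _) hn).
Qed.

Lemma smulC (F : fieldType) (a b : nat -> F) : smul a b = smul b a.
Proof.
apply: functional_extensionality => n.
by rewrite !(@smul_tr _ n.+1) // mulrC.
Qed.

Lemma coef_agree (F : fieldType) N (p q r : {poly F}) n :
  (forall i, (i < N)%N -> p`_i = q`_i) -> (n < N)%N -> (p * r)`_n = (q * r)`_n.
Proof.
move=> h hn; rewrite !coefM; apply: eq_bigr => i _.
by rewrite h // (leq_ltn_trans (leq_ord i) hn).
Qed.

Lemma smulA (F : fieldType) (a b c : nat -> F) :
  smul (smul a b) c = smul a (smul b c).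
Proof.
apply: functional_extensionality => n.
rewrite !(@smul_tr _ n.+1) //.
rewrite (@coef_agree _ n.+1 _ (tr n.+1 a * tr n.+1 b)) //; last first.
  by move=> i hi; rewrite /tr coef_poly hi (@smul_tr _ n.+1).
rewrite [in RHS]mulrC [in RHS](@coef_agree _ n.+1 (tr n.+1 (smul b c)) (tr n.+1 b * tr n.+1 c)) //; last first.
  by move=> i hi; rewrite /tr coef_poly hi (@smul_tr _ n.+1).
by rewrite [in RHS]mulrC mulrA.
Qed.

Lemma sone_smul (F : fieldType) (a : nat -> F) : smul (@sone F) a = a.
Proof.
apply: functional_extensionality => n.
rewrite /smul big_ord_recl /= /sone /= mul1r subn0 big1 ?addr0 // => i _.
by rewrite mul0r.
Qed.

Lemma smul_sone (F : fieldType) (a : nat -> F) : smul a (@sone F) = a.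
Proof. by rewrite smulC sone_smul. Qed.

Lemma smulDr (F : fieldType) (a b c : nat -> F) n :
  smul a (fun j => b j + c j) n = smul a b n + smul a c n.
Proof. by rewrite /smul -big_split; apply: eq_bigr => i _; rewrite mulrDr. Qed.

Lemma smulZr (F : fieldType) (a b : nat -> F) (k : F) n :
  smul a (fun j => k * b j) n = k * smul a b n.
Proof. by rewrite /smul mulr_sumr; apply: eq_bigr => i _; rewrite mulrCA. Qed.

Lemma smulZl (F : fieldType) (a b : nat -> F) (k : F) n :
  smul (fun j => k * a j) b n = k * smul a b n.
Proof. by rewrite /smul mulr_sumr; apply: eq_bigr => i _; rewrite mulrA. Qed.

Lemma smul_sumr (F : fieldType) (a : nat -> F) (M : nat) (b : nat -> nat -> F) n :
  smul a (fun j => \sum_(m < M) b m j) n = \sum_(m < M) smul a (b m) n.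
Proof.
rewrite /smul exchange_big; apply: eq_bigr => i _; by rewrite mulr_sumr.
Qed.
Lemma spow_low (F : fieldType) (u : nat -> F) (hu : u 0%N = 0) m n :
  (n < m)%N -> spow u m n = 0.
Proof.
elim: m n => [//|m IH] n hn /=.
rewrite /smul big1 // => [[i hi]] _ /=.
case: i hi => [|i] hi; first by rewrite hu mul0r.
by rewrite IH ?mulr0 //; lia.
Qed.

Lemma smul_eq_low (F : fieldType) (a b c : nat -> F) n :
  (forall j, (j <= n)%N -> b j = c j) -> smul a b n = smul a c n.
Proof. by move=> h; rewrite /smul; apply: eq_bigr => i _; rewrite h // leq_subr. Qed.

Lemma smulBl (F : fieldType) (a b c : nat -> F) n :
  smul (fun j => a j - b j) c n = smul a c n - smul b c n.
Proof. by rewrite /smul -sumrB; apply: eq_bigr => i _; rewrite mulrBl. Qed.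

Lemma smul_sinv (F : fieldType) (a : nat -> F) : a 0%N != 0 ->
  smul a (sinv a) = @sone F.
Proof.
move=> ha; apply: functional_extensionality => n.
set u : nat -> F := fun n => if n is 0 then 0 else - (a n / a 0%N).
have hu : u 0%N = 0 by [].
have aE : a = (fun j => a 0%N * (sone F j - u j)).
  apply: functional_extensionality => -[|j]; rewrite /sone /u /=.
    by rewrite subr0 mulr1.
  by rewrite sub0r opprK mulrCA divff // mulr1.
rewrite (@smul_eq_low _ _ _ (fun j => (a 0%N)^-1 * \sum_(m < n.+1) spow u m j)); last first.
  move=> j hj; rewrite /sinv /scomp -/u; congr (_ * _).
  rewrite (big_ord_widen n.+1 (fun m => 1 * spow u m j)) // big_mkcond /=.
  apply: eq_bigr => i _; case: ifP => // hi; rewrite ?mul1r // spow_low //.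
  by rewrite ltnNge -ltnS hi.
rewrite smulZr [X in smul X _ _]aE smulZl mulrA mulVf // mul1r smul_sumr.
under eq_bigr => m _ do rewrite smulBl sone_smul /=.
rewrite -(big_mkord xpredT (fun m => spow u m n - smul u (spow u m) n)).

have -> : \sum_(0 <= i < n.+1) (spow u i n - smul u (spow u i) n)
    = - \sum_(0 <= i < n.+1) (spow u i.+1 n - spow u i n).
  by rewrite -sumrN; apply: eq_bigr => i _; rewrite opprB.
by rewrite telescope_sumr // spow_low // sub0r opprK.
Qed.

Lemma fact_neq0 (F : numFieldType) n : (n`!)%:R != 0 :> F.
Proof. by rewrite pnatr_eq0 -lt0n fact_gt0. Qed.

Lemma binfE (F : numFieldType) n i : (i <= n)%N ->
  (n`!)%:R = ('C(n, i))%:R * ((i`!)%:R * ((n - i)`!)%:R) :> F.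
Proof. by move=> h; rewrite -!natrM bin_fact. Qed.

Lemma expserD1 (F : numFieldType) (x : F) :
  expser (x + 1) = smul (expser x) (expser 1).
Proof.
apply: functional_extensionality => n.
rewrite /expser /smul addrC exprDn mulr_suml; apply: eq_bigr => -[i hi] _ /=.
have hin : (i <= n)%N by [].
rewrite expr1n !mul1r -mulr_natr (@binfE F _ _ hin).
have h1 := fact_neq0 F i; have h2 := fact_neq0 F (n - i).
have h3 : ('C(n, i))%:R != 0 :> F by rewrite pnatr_eq0 -lt0n bin_gt0.
by field; rewrite h1 h2 h3.
Qed.

Lemma FE0 (F : numFieldType) (lam x : F) m : FrobEuler 0 lam x m = x ^+ m.
Proof.
rewrite /FrobEuler /= sone_smul /expser mulrC divfK //; exact: fact_neq0.
Qed.

Lemma FEshift (F : numFieldType) s (lam x : F) m :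
  FrobEuler s lam (x + 1) m = \sum_(i < m.+1) ('C(m, i))%:R * FrobEuler s lam x i.
Proof.
rewrite /FrobEuler expserD1 -smulA.
set E := smul _ (expser x).
rewrite /smul mulr_sumr.
apply: eq_bigr => -[i hi] _ /=.
have him : (i <= m)%N by [].
rewrite /expser expr1n (@binfE F _ _ him).
have h1 := fact_neq0 F i; have h2 := fact_neq0 F (m - i).
by field; rewrite h2.
Qed.

Lemma smulBr (F : fieldType) (a b c : nat -> F) n :
  smul a (fun j => b j - c j) n = smul a b n - smul a c n.
Proof. by rewrite /smul -sumrB; apply: eq_bigr => i _; rewrite mulrBr. Qed.

Lemma smul_perm (F : fieldType) (a b c d : nat -> F) :
  smul (smul a b) (smul c d) = smul (smul (smul a d) b) c.
Proof.
rewrite !smulA [smul c d]smulC -(smulA _ b d c) [smul b d]smulC (smulA _ d b c).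
by [].
Qed.

Lemma FEstep (F : numFieldType) s (lam x : F) m : lam != 1 ->
  (1 - lam) * FrobEuler s lam x m =
  FrobEuler s.+1 lam (x + 1) m - lam * FrobEuler s.+1 lam x m.
Proof.
move=> hl.
set e : nat -> F := fun n => if n is 0 then 1 - lam else ((n`!)%:R)^-1.
have he0 : e 0%N != 0 by rewrite /e subr_eq0 eq_sym.
have hB : FE_base lam = (fun n => (1 - lam) * sinv e n) by [].
have hBe : smul (FE_base lam) e = (fun n => (1 - lam) * sone F n).
  apply: functional_extensionality => n.
  by rewrite hB smulZl smulC smul_sinv.
have hx : (fun j => expser (x + 1) j - lam * expser x j) = smul (expser x) e.
  apply: functional_extensionality => j.
  have -> : e = (fun j => expser 1 j - lam * sone F j).
    apply: functional_extensionality => -[|i]; rewrite /e /expser /sone /=.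
      by rewrite expr1n divr1 mulr1.
    by rewrite mulr0 subr0 expr1n div1r.
  by rewrite smulBr smulZr smul_sone expserD1.
rewrite /FrobEuler [lam * (_ * _)]mulrCA -mulrBr -(smulZr _ _ (expser x) lam m) -smulBr hx.
rewrite mulrCA; congr (_ * _).
change (spow (FE_base lam) s.+1) with (smul (FE_base lam) (spow (FE_base lam) s)).
rewrite smul_perm hBe -smulZl.
have -> : smul (fun n => (1 - lam) * sone F n) (spow (FE_base lam) s) =
  (fun j => (1 - lam) * spow (FE_base lam) s j).
  by apply: functional_extensionality => j; rewrite smulZl sone_smul.
by [].
Qed.
Lemma size_index_ord n : size (index_enum 'I_n) = n.
Proof. by rewrite -[RHS]card_ord cardE enumT /index_enum unlock. Qed.

Lemma S1_horner (F : numFieldType) n (x : F) :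
  \prod_(i < n) (x - i%:R) = \sum_(m < n.+1) (S1 n m)%:~R * x ^+ m.
Proof.
have h := map_prod_XsubC (intr : int -> F) (index_enum 'I_n) xpredT (fun i : 'I_n => (i : nat)%:Z).
have e2 := horner_coef_wide x (p := map_poly (intr : int -> F) (\prod_(i < n) ('X - (i%:Z)%:P))) (n := n.+1).
rewrite h size_prod_XsubC size_index_ord leqnn in e2.
have {}e2 := e2 isT.
rewrite horner_prod in e2.
transitivity (\prod_(i < n) ('X - ((i : nat)%:Z%:~R : F)%:P).[x]).
  by apply: eq_bigr => i _; rewrite hornerXsubC.
rewrite e2 /S1; apply: eq_bigr => i _.
by rewrite -h coef_map.
Qed.

Lemma S1_small j m : (j < m)%N -> S1 j m = 0.
Proof. by move=> h; rewrite /S1 nth_default // size_prod_XsubC size_index_ord. Qed.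

Lemma coefXD1 m i : ((('X + 1) ^+ m : {poly int})`_i = ('C(m, i))%:R).
Proof.
elim: m i => [|m IH] i; first by rewrite expr0 coefC; case: i.
rewrite exprSr mulrDr mulr1 coefD coefMX.
case: i => [|i] /=; first by rewrite add0r IH !bin0.
by rewrite !IH binS natrD addrC.
Qed.

Definition Pf (j : nat) : {poly int} := \prod_(i < j) ('X - (i%:Z)%:P).

Lemma Pf_shift J : Pf J.+1 \Po ('X + 1) = Pf J.+1 + Pf J *+ J.+1.
Proof.
rewrite {1}/Pf big_ord_recl comp_polyM.
have -> : \prod_(i < J) ('X - ((lift ord0 i : nat)%:Z)%:P) \Po ('X + 1) = Pf J.
  rewrite rmorph_prod /Pf; apply: eq_bigr => i _.
  rewrite rmorphB /= comp_polyX comp_polyC /bump leq0n add1n -addn1 PoszD polyCD.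
  ring.
rewrite /Pf big_ord_recr /= -/(Pf J).
rewrite rmorphB /= comp_polyX comp_polyC subr0.
have -> : ((J%:Z)%:P : {poly int}) = J%:R by rewrite -polyC_natr natz.
rewrite -mulr_natr.
ring.
Qed.

Lemma S1_shiftZ J i :
  \sum_(m < J.+2) S1 J.+1 m * ('C(m, i))%:R = S1 J.+1 i + S1 J i *+ J.+1.
Proof.
have := congr1 (fun p : {poly int} => p`_i) (Pf_shift J).
rewrite /= coef_comp_poly /Pf size_prod_XsubC size_index_ord coefD coefMn.
move=> <-; apply: eq_bigr => m _; by rewrite coefXD1.
Qed.

Lemma S1_shiftF (F : numFieldType) J i :
  \sum_(m < J.+2) (S1 J.+1 m)%:~R * ('C(m, i))%:R =
  (S1 J.+1 i)%:~R + (J.+1)%:R * (S1 J i)%:~R :> F.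
Proof.
have := congr1 (intr : int -> F) (S1_shiftZ J i).
rewrite rmorphD rmorphMn rmorph_sum /= mulr_natl => <-.
by apply: eq_bigr => m _; rewrite rmorphM /= rmorph_nat.
Qed.

Definition w1 {F : fieldType} (c : F) : nat -> F :=
  fun n => if n is 0 then 1 else if n is 1 then c else 0.

Lemma smul_w1S (F : fieldType) (c : F) b n :
  smul (w1 c) b n.+1 = b n.+1 + c * b n.
Proof.
rewrite /smul big_ord_recl big_ord_recl big1 ?addr0 /=.
  by rewrite mul1r subn0 subSS subn0 addrC.
by move=> i _; rewrite mul0r.
Qed.

Lemma smul_w10 (F : fieldType) (c : F) b : smul (w1 c) b 0 = b 0%N.
Proof. by rewrite /smul big_ord_recl big_ord0 addr0 /= mul1r. Qed.

Lemma spow_w1 (F : fieldType) (c : F) s a :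
  spow (w1 c) s a = ('C(s, a))%:R * c ^+ a.
Proof.
elim: s a => [|s IH] a.
  by case: a => [|a] /=; rewrite /sone /= ?mulr1 // mul0r.
change (smul (w1 c) (spow (w1 c) s) a = 'C(s.+1, a)%:R * c ^+ a).
case: a => [|a].
  by rewrite smul_w10 IH !bin0.
rewrite smul_w1S !IH binS natrD mulrDl exprS.
by rewrite [c * (_ * _)]mulrCA addrC.
Qed.

Definition Tseq {F : numFieldType} (s : nat) (lam x : F) : nat -> F :=
  fun j => \sum_(m < j.+1) (S1 j m)%:~R / (j`!)%:R * FrobEuler s lam x m.

Lemma sum_widen (F : numFieldType) k N (f : nat -> F) : (k <= N)%N ->
  (forall i, (k <= i)%N -> (i < N)%N -> f i = 0) ->
  \sum_(i < k) f i = \sum_(i < N) f i.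
Proof.
move=> hk h; rewrite (big_ord_widen N f hk) big_mkcond; apply: eq_bigr => i _.
case: ifP => // /negbT; rewrite -leqNgt => hi; by rewrite h.
Qed.

Lemma sum_tri (F : numFieldType) j (a h : nat -> F) :
  \sum_(m < j.+1) a m * \sum_(i < m.+1) ('C(m, i))%:R * h i =
  \sum_(i < j.+1) (\sum_(m < j.+1) a m * ('C(m, i))%:R) * h i.
Proof.
transitivity (\sum_(m < j.+1) \sum_(i < j.+1) a m * (('C(m, i))%:R * h i)).
  apply: eq_bigr => m _; rewrite mulr_sumr.
  apply: (@sum_widen F m.+1 j.+1 (fun i => a m * (('C(m, i))%:R * h i))) => //.
  by move=> i hi _; rewrite bin_small // mul0r mulr0.
rewrite exchange_big; apply: eq_bigr => i _; rewrite mulr_suml.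
by apply: eq_bigr => m _; rewrite mulrA.
Qed.

Lemma T_pre (F : numFieldType) s (lam x : F) j : lam != 1 ->
  (1 - lam) * Tseq s lam x j =
  \sum_(i < j.+1) (\sum_(m < j.+1) (S1 j m)%:~R / (j`!)%:R * ('C(m, i))%:R)
     * FrobEuler s.+1 lam x i - lam * Tseq s.+1 lam x j.
Proof.
move=> hl; rewrite -(@sum_tri F j (fun m => (S1 j m)%:~R / (j`!)%:R) (FrobEuler s.+1 lam x)) /Tseq !mulr_sumr -sumrB; apply: eq_bigr => m _.
rewrite mulrCA FEstep // FEshift mulrBr; congr (_ - _).
by rewrite mulrCA.
Qed.

Lemma T_step (F : numFieldType) s (lam x : F) : lam != 1 ->
  Tseq s lam x = smul (w1 (1 - lam)^-1) (Tseq s.+1 lam x).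
Proof.
move=> hl; have hl' : 1 - lam != 0 by rewrite subr_eq0 eq_sym.
apply: functional_extensionality => -[|J].
  rewrite smul_w10; apply: (mulfI hl'); rewrite T_pre //.
  rewrite big_ord1 big_ord1 bin0 /Tseq big_ord1 mulr1 mulrBl mul1r.
  by [].
rewrite smul_w1S; apply: (mulfI hl'); rewrite T_pre //.
have E : forall i : 'I_J.+2,
  \sum_(m < J.+2) (S1 J.+1 m)%:~R / (J.+1)`!%:R * ('C(m, i))%:R =
  (S1 J.+1 i)%:~R / (J.+1)`!%:R + (S1 J i)%:~R / (J`!)%:R :> F.
  move=> i.
  transitivity ((\sum_(m < J.+2) (S1 J.+1 m)%:~R * ('C(m, i))%:R) / (J.+1)`!%:R : F).
    by rewrite mulr_suml; apply: eq_bigr => m _; rewrite mulrAC.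
  rewrite S1_shiftF factS natrM.
  have h1 := fact_neq0 F J; have h2 : (J.+1)%:R != 0 :> F by rewrite pnatr_eq0.
  by field; rewrite h1 /= addrC natr1 h2.
rewrite (eq_bigr (fun i : 'I_J.+2 => ((S1 J.+1 i)%:~R / (J.+1)`!%:R + (S1 J i)%:~R / (J`!)%:R) * FrobEuler s.+1 lam x i)); last by move=> i _; rewrite E.
under eq_bigr => i _ do rewrite mulrDl.
rewrite big_split /=.
rewrite [X in _ + X - _](big_ord_recr) /= S1_small // mul0r mul0r addr0.
change (Tseq s.+1 lam x J.+1 + Tseq s.+1 lam x J - lam * Tseq s.+1 lam x J.+1 =
  (1 - lam) * (Tseq s.+1 lam x J.+1 + (1 - lam)^-1 * Tseq s.+1 lam x J)).
by field.
Qed.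

Lemma binser_Q (F : numFieldType) s (lam x : F) : lam != 1 ->
  binser x = smul (spow (w1 (1 - lam)^-1) s) (Tseq s lam x).
Proof.
move=> hl; elim: s => [|s IH].
  rewrite /= sone_smul; apply: functional_extensionality => j.
  rewrite /binser /Tseq S1_horner mulr_suml; apply: eq_bigr => m _.
  by rewrite FE0 mulrAC.
rewrite IH (T_step _ s lam x hl) -smulA [smul _ (w1 _)]smulC.
by [].
Qed.

Lemma binser0 (F : numFieldType) : binser (0 : F) = sone F.
Proof.
apply: functional_extensionality => -[|j].
  by rewrite /binser /sone big_ord0 /= divr1.
by rewrite /binser /sone big_ord_recl /= subrr mul0r mul0r.
Qed.

Lemma final_alg (F : numFieldType) n s (lam : F) (G H : nat -> F) :
  1 - lam != 0 ->
  (n`!)%:R * smul (smul (spow (w1 (1 - lam)^-1) s) G)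
     (fun j => \sum_(m < j.+1) (S1 j m)%:~R / (j`!)%:R * H m) n =
  \sum_(m < n.+1)
    (\sum_(l < (n - m)%N.+1) \sum_(a < l.+1)
        ('C(n, l) * 'C(s, a) * 'C(l, a) * a`!)%:R / (1 - lam) ^+ a
        * (S1 (n - l)%N m)%:~R * ((l - a)`!%:R * G (l - a)%N))
    * H m.
Proof.
move=> hl.
set Y := fun m l a => ('C(n, l) * 'C(s, a) * 'C(l, a) * a`!)%:R / (1 - lam) ^+ a
        * (S1 (n - l)%N m)%:~R * ((l - a)`!%:R * G (l - a)%N) * H m.
transitivity (\sum_(l < n.+1) \sum_(a < l.+1) \sum_(m < n.+1) Y m l a).
  rewrite /smul mulr_sumr; apply: eq_bigr => -[l hl1] _ /=.
  rewrite mulr_suml mulr_sumr; apply: eq_bigr => -[a ha] _ /=.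
  have hln : (l <= n)%N by []. have hal : (a <= l)%N by [].
  rewrite !mulr_sumr.
  rewrite (@sum_widen F (n-l).+1 n.+1 (fun m => n`!%:R * (spow (w1 (1 - lam)^-1) s a * G (l - a)%N * ((S1 (n - l) m)%:~R / (n - l)`!%:R * H m)))); last first.
  - by move=> m hm1 hm2; rewrite S1_small ?mul0r ?mulr0 //; lia.
  - by rewrite ltnS leq_subr.
  apply: eq_bigr => -[m hm] _ /=.
  rewrite /Y spow_w1 !natrM (@binfE F _ _ hln) (@binfE F _ _ hal) exprVn.
  have h1 := fact_neq0 F (n - l); have h2 : (1 - lam) ^+ a != 0 by rewrite expf_neq0.
  by field; rewrite h1 h2.
transitivity (\sum_(m < n.+1) \sum_(l < n.+1) \sum_(a < l.+1) Y m l a).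
  rewrite exchange_big; apply: eq_bigr => l _; by rewrite exchange_big.
apply: eq_bigr => -[m hm] _ /=; rewrite mulr_suml.
under [in RHS]eq_bigr => l _ do rewrite mulr_suml.
symmetry; apply: (@sum_widen F (n-m).+1 n.+1 (fun l => \sum_(a < l.+1) Y m l a)) => [|l hl1 hl2]; first by rewrite ltnS leq_subr.
rewrite big1 // => a _.
by rewrite /Y S1_small ?mulr0 ?mul0r //; lia.
Qed.

Local Open Scope complex_scope.

Theorem theorem8 (R : realType) (n r s : nat) (k : int) (lam x : R[i])
  (hlam : lam != 1) :
  Atilde r k x n =
  \sum_(m < n.+1)
    (\sum_(l < (n - m)%N.+1) \sum_(a < l.+1)
        ('C(n, l) * 'C(s, a) * 'C(l, a) * a`!)%:R / (1 - lam) ^+ a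
        * (S1 (n - l)%N m)%:~R * Atilde0 r k (l - a)%N)
    * FrobEuler s lam x m.
Proof.
have hl : 1 - lam != 0 by rewrite subr_eq0 eq_sym.
rewrite /Atilde0 /Atilde binser0 smul_sone (binser_Q _ s lam x hlam).
rewrite -smulA [smul _ (spow _ _)]smulC.
exact: (@final_alg _ n s lam _ (FrobEuler s lam x) hl).
Qed.
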